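(* For every real sequence $u\in\mathbb R^{\mathbb N}$, $$\mathbf K^s_u=\inf_{(h,\beta)\in\Gamma(u)}\ \inf_{k\in\mathcal S(u,h)}\mathfrak F_u(k,h,\beta)=\inf_{(h,\beta)\in\Gamma(u)}\ \inf_{k\in\mathcal S(u,h)}\frac{\ln(h^{-1}_{[0,1]}(u_k))}{\ln\beta},$$ with $\inf\emptyset=+\infty$. Moreover, when $G^{>}_u\neq\emptyset$, both infima are attained (they are minima).
   Context: $\Delta^s_u=\{k\in\mathbb N:\max_{0\le j\le k}u_j>\sup_{j>k}u_j\}$, $\mathbf K^s_u=\inf\Delta^s_u$; $G^{>}_u=\{k:u_k>\limsup_n u_n\}$. $\Omega([0,1])$: functions $h:\mathbb R\to\mathbb R$ whose restriction to $[0,1]$ is strictly increasing and continuous; $h^{-1}_{[0,1]}$ the inverse of that restriction. $\Gamma(u)=\{(h,\beta)\in\Omega([0,1])\times(0,1):u_k\le h(\beta^k)\ \forall k\}$; $\mathcal S(u,h)=\{k:u_k>h(0)\}$. $\mathfrak F_u(k,h,\beta)=\ln(h^{-1}_{[0,1]}(u_k))/\ln\beta$ if $(h,\beta)\in\Gamma(u)$ and $k\in\mathcal S(u,h)$, and $+\infty$ otherwise. *)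

(* Defs.v *)
From HB Require Import structures.
From mathcomp Require Import all_boot all_order all_algebra.
From mathcomp Require Import all_classical all_reals all_analysis.
Set Implicit Arguments. Unset Strict Implicit. Unset Printing Implicit Defensive.
Import Order.TTheory GRing.Theory Num.Theory.
Import numFieldNormedType.Exports.
Local Open Scope classical_set_scope.
Local Open Scope ring_scope.

Section Defs.
Variable R : realType.

Definition DeltaS (u : nat -> R) : set nat :=
  [set k | ereal_sup [set (u j)%:E | j in [set j | (k < j)%N]] <
           (\big[Order.max/u 0%N]_(j < k.+1) u j)%:E]%E.

(* K^s_u = inf Delta^s_u in N u {+oo}, embedded in \bar R (inf of empty = +oo) *)
Definition KS (u : nat -> R) : \bar R :=
  ereal_inf [set (k%:R)%:E | k in DeltaS u].

Definition Ggt (u : nat -> R) : set nat :=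
  [set k | (limn_esup (fun n => (u n)%:E) < (u k)%:E)%E].

Definition Omega01 (h : R -> R) : Prop :=
  (forall x y : R, 0 <= x <= 1 -> 0 <= y <= 1 -> x < y -> h x < h y) /\
  {within `[0, 1], continuous h}.

(* inverse of the restriction of h to [0,1] (arbitrary value 0 outside h([0,1])) *)
Definition hinv01 (h : R -> R) (y : R) : R :=
  xget 0 [set x | 0 <= x <= 1 /\ h x = y].

Definition Gamma (u : nat -> R) : set ((R -> R) * R) :=
  [set hb | Omega01 hb.1 /\ 0 < hb.2 < 1 /\
            forall k : nat, u k <= hb.1 (hb.2 ^+ k)].

Definition Sset (u : nat -> R) (h : R -> R) : set nat :=
  [set k | h 0 < u k].

Definition FF (u : nat -> R) (k : nat) (h : R -> R) (beta : R) : \bar R :=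
  if `[< Gamma u (h, beta) /\ Sset u h k >]
  then (ln (hinv01 h (u k)) / ln beta)%:E
  else +oo%E.

End Defs.

(* Main.v *)
Require Import Defs.
From HB Require Import structures.
From mathcomp Require Import all_boot all_order all_algebra.
From mathcomp Require Import all_classical all_reals all_analysis.
Import Order.TTheory GRing.Theory Num.Theory.
Import numFieldNormedType.Exports.
Local Open Scope classical_set_scope.
Local Open Scope ring_scope.

Section Aux.
Variable R : realType.
Variable u : nat -> R.

Lemma bm_ge k m : (k <= m)%N -> u k <= \big[Order.max/u 0%N]_(j < m.+1) u j.
Proof.
move=> hk; have hk' : (k < m.+1)%N by [].
exact: (le_bigmax (u 0%N) (fun j : 'I_m.+1 => u j) (Ordinal hk')).
Qed.

Lemma bm_arg m : exists2 k, (k <= m)%N & u k = \big[Order.max/u 0%N]_(j < m.+1) u j.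
Proof.
apply: (big_ind (fun x => exists2 k, (k <= m)%N & u k = x)).
- by exists 0%N.
- move=> x y [k1 h1 e1] [k2 h2 e2]; rewrite maxEle; case: ifP => _.
    by exists k2.
  by exists k1.
- by move=> i _; exists (nat_of_ord i) => //; rewrite -ltnS.
Qed.

Lemma h_mono (h : R -> R) (x y : R) : Omega01 h -> 0 <= x <= 1 -> 0 <= y <= 1 -> x <= y -> h x <= h y.
Proof.
move=> [hs _] hx hy; rewrite le_eqVlt => /orP[/eqP->//|lt].
by apply/ltW/hs.
Qed.

Lemma hinv_eq (h : R -> R) (x : R) : Omega01 h -> 0 <= x <= 1 -> hinv01 h (h x) = x.
Proof.
move=> [hs _] hx; apply: xget_unique => // y [hy hyx].
case: (ltgtP y x) => // lt.
- by have := hs _ _ hy hx lt; rewrite hyx ltxx.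
- by have := hs _ _ hx hy lt; rewrite hyx ltxx.
Qed.

Lemma lin_cont (r c : R) : continuous (fun x : R => r + c * x).
Proof.
move=> x; apply: (@continuousD _ _ _ (fun=> r) (fun x => c * x)).
  exact: cst_continuous.
apply: (@continuousM _ _ (fun=> c) id); first exact: cst_continuous.
exact: id.
Qed.


Lemma partA (h : R -> R) (b : R) k : Gamma u (h, b) -> Sset u h k ->
  (KS u <= (ln (hinv01 h (u k)) / ln b)%:E)%E.
Proof.
move=> [hO [/andP[b0 b1] hb]]; rewrite /Sset /= => hk.
have bj01 : forall j, 0 <= b^+j <= 1.
  by move=> j; apply/andP; split; [apply: exprn_ge0; apply: ltW|apply: exprn_ile1; apply: ltW].
have bk01 := bj01 k.
have h0k : h 0 <= h (b^+k) by apply: h_mono => //; rewrite ?lexx ?ler01 //; case/andP: bk01.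
have [x xI hx] : exists2 x, x \in `[0, b^+k] & h x = u k.
  apply: IVT; first by case/andP: bk01.
    apply: continuous_subspaceW (proj2 hO) => y /=; rewrite !in_itv /= => /andP[y0 y1].
    by rewrite y0 (le_trans y1) //; case/andP: bk01.
  by rewrite min_l // max_r // (ltW hk) hb.
rewrite in_itv /= in xI; case/andP: xI => x0 xk.
have x1 : x <= 1 by apply: le_trans xk _; case/andP: bk01.
have xpos : 0 < x.
  rewrite lt_neqAle x0 andbT; apply/eqP => x0'; move: hk; by rewrite -hx -x0' ltxx.
rewrite -hx hinv_eq ?x0 ?x1 //.
have lb0 : ln b < 0 by apply: ln_lt0; rewrite b0 b1.
have bkpos : forall n, 0 < b^+n by move=> n; apply: exprn_gt0.
set t := ln x / ln b.
have kt : k%:R <= t.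
  rewrite /t ler_ndivlMr // mulr_natl -lnXn // ler_ln ?posrE //.
have t0 : 0 <= t by apply: le_trans kt.
set m := Num.truncn t.
have km : (k <= m)%N by rewrite truncn_ge_nat.
have tm : t < m.+1%:R by rewrite -truncn_le_nat.
have bm1 : b^+m.+1 < x.
  rewrite -ltr_ln ?posrE // lnXn // -mulr_natl -ltr_ndivrMr //.
have Dm : DeltaS u m.
  rewrite /DeltaS /=; apply: (@le_lt_trans _ _ (h (b^+m.+1))%:E).
    apply: ge_ereal_sup => _ [j /= hj <-]; rewrite lee_fin (le_trans (hb j)) //.
    by apply: h_mono => //; apply: ler_wiXn2l => //; apply: ltW.
  rewrite lte_fin (lt_le_trans _ (@bm_ge k m km)) // -hx.
  by apply: (proj1 hO) => //; rewrite x0 x1.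
apply: (le_trans (ereal_inf_lbound _)); first by exists m.
by rewrite lee_fin -truncn_ge_nat.
Qed.

Lemma partB m : DeltaS u m -> exists (h : R -> R) (b : R) k,
  Gamma u (h, b) /\ Sset u h k /\ FF u k h b = (m%:R)%:E.
Proof.
move=> Dm.
have [r rM ur] : exists2 r, r < \big[Order.max/u 0%N]_(j < m.+1) u j &
    forall j, (m < j)%N -> u j <= r.
  have ub : forall j, (m < j)%N ->
      ((u j)%:E <= ereal_sup [set (u j)%:E | j in [set j | (m < j)%N]])%E.
    by move=> j hj; apply: ereal_sup_ubound; exists j.
  move: ub Dm; rewrite /DeltaS /=; case: (ereal_sup _) => [r| |] ub Dm.
  - by exists r; [rewrite -lte_fin | move=> j hj; rewrite -lee_fin; exact: ub].
  - by rewrite ltNge leey in Dm.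
  - by have := ub m.+1 (ltnSn m); rewrite leeNy_eq.
have [k km uk] := bm_arg m.
set M := \big[Order.max/u 0%N]_(j < m.+1) u j in rM uk.
set b : R := 2^-1.
have b0 : 0 < b by rewrite /b invr_gt0.
have b1 : b < 1 by rewrite /b invf_lt1 // ltr1n.
have bm0 : 0 < b^+m by apply: exprn_gt0.
set c := (M - r) / b^+m.
have c0 : 0 < c by apply: divr_gt0 => //; rewrite subr_gt0.
exists (fun x => r + c * x), b, k.
have hO : Omega01 (fun x => r + c * x).
  split; first by move=> x y _ _ xy; rewrite ltrD2l ltr_pM2l.
  apply: continuous_subspaceT; exact: lin_cont.
have hbm : r + c * b^+m = M by rewrite /c divfK ?gt_eqF // addrC subrK.
have G : Gamma u ((fun x => r + c * x), b).
  split=> //; split; first by rewrite b0 b1.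
  move=> j /=; case: (leqP j m) => hj.
  - rewrite (le_trans (@bm_ge j m hj)) // -/M -hbm lerD2l ler_pM2l //.
    by apply: ler_wiXn2l => //; apply: ltW.
  - rewrite (le_trans (ur _ hj)) // lerDl; apply: mulr_ge0; first exact: ltW.
    by apply: exprn_ge0; apply: ltW.
have Sk : Sset u (fun x => r + c * x) k by rewrite /Sset /= mulr0 addr0 uk.
split=> //; split=> //.
rewrite /FF asboolT //= uk -hbm.
have -> : hinv01 (fun x => r + c * x) (r + c * b^+m) = b^+m.
  by apply: (@hinv_eq _ (b^+m) hO); apply/andP; split; [apply: exprn_ge0; apply: ltW|apply: exprn_ile1; apply: ltW].
have lb0 : ln b < 0 by apply: ln_lt0; rewrite b0 b1.
by congr (_%:E); rewrite lnXn // mulrnAl divff // lt_eqF.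
Qed.

Lemma partC : Ggt u !=set0 -> exists m, DeltaS u m.
Proof.
move=> [k hk]; rewrite /Ggt /= limn_esup_lim in hk.
have E : limn (esups (fun n => (u n)%:E)) =
    ereal_inf (range (esups (fun n => (u n)%:E))).
  by apply: cvg_lim => //; exact: cvg_esups_inf.
rewrite E in hk.
have [_ [n _ <-] hn] := ereal_inf_lt hk.
exists (maxn n k); rewrite /DeltaS /=.
apply: (le_lt_trans _ (lt_le_trans hn _)).
  apply: ereal_sup_le => _ [j hj <-]; exists j => //=.
  by move: hj; rewrite /= gtn_max => /andP[/ltnW].
by rewrite lee_fin; apply: bm_ge; apply: leq_maxr.
Qed.

End Aux.

Theorem mainTheorem8 (R : realType) (u : nat -> R) :
  KS u = ereal_inf [set ereal_inf [set FF u k hb.1 hb.2 | k in Sset u hb.1]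
                   | hb in Gamma u] /\
  ereal_inf [set ereal_inf [set FF u k hb.1 hb.2 | k in Sset u hb.1]
            | hb in Gamma u] =
  ereal_inf [set ereal_inf [set (ln (hinv01 hb.1 (u k)) / ln hb.2)%:E
                           | k in Sset u hb.1]
            | hb in Gamma u] /\
  (Ggt u !=set0 ->
     (exists k, DeltaS u k /\ KS u = (k%:R)%:E) /\
     (exists h (beta : R) (k : nat),
        Gamma u (h, beta) /\ Sset u h k /\
        FF u k h beta = KS u)).
Proof.
have eq2 : ereal_inf [set ereal_inf [set FF u k hb.1 hb.2 | k in Sset u hb.1]
            | hb in Gamma u] =
  ereal_inf [set ereal_inf [set (ln (hinv01 hb.1 (u k)) / ln hb.2)%:E
                           | k in Sset u hb.1]
            | hb in Gamma u].
  congr (ereal_inf _); apply: eq_imagel => -[h b] hG /=.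
  congr (ereal_inf _); apply: eq_imagel => k hk.
  by rewrite /FF asboolT.
have eq1 : KS u = ereal_inf [set ereal_inf [set FF u k hb.1 hb.2 | k in Sset u hb.1]
                   | hb in Gamma u].
  apply/eqP; rewrite eq_le; apply/andP; split.
  - apply: le_ereal_inf_tmp => _ [[h b] hG <-] /=.
    apply: le_ereal_inf_tmp => _ [k hk <-] /=.
    by rewrite /FF asboolT //; exact: (@partA R u).
  - apply: le_ereal_inf_tmp => _ [m hm <-].
    have [h [b [k [hG [hk hF]]]]] := @partB R u m hm.
    rewrite -hF; apply: (le_trans (ereal_inf_lbound _)); first by exists (h, b).
    by apply: ereal_inf_lbound; exists k.
split => //; split => //.
move=> hG; have [m0 hm0] := @partC R u hG.
pose P := fun n => `[< DeltaS u n >].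
have exP : exists n, P n by exists m0; apply/asboolP.
case: (ex_minnP exP) => m /asboolP Dm minm.
have KSm : KS u = (m%:R)%:E.
  apply/eqP; rewrite eq_le; apply/andP; split.
    by apply: ereal_inf_lbound; exists m.
  apply: le_ereal_inf_tmp => _ [n hn <-]; rewrite lee_fin ler_nat; apply: minm.
  exact/asboolP.
split; first by exists m.
have [h [b [k [hG' [hk hF]]]]] := @partB R u m Dm.
by exists h, b, k; rewrite KSm.
Qed.
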